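(* Let $A$ be a topological ring. If the completion of $A$ is a field, then $A$ is topologically simple. If $A$ is a Huber ring whose topology is defined by an absolute value, then conversely $A$ topologically simple implies that its completion is a field.
   Context: A topological ring is topologically simple if the closure of the zero ideal is its only closed ideal (equivalently, every nonzero element of $A/\overline{(0)}$ is a topological unit, i.e. generates a dense ideal). *)

(* Defs.v *)
From HB Require Import structures.
From mathcomp Require Import all_boot all_order all_algebra.
From mathcomp Require Import all_classical all_reals topology.
From mathcomp Require Import Rstruct.
Set Implicit Arguments. Unset Strict Implicit. Unset Printing Implicit Defensive.
Import Order.TTheory GRing.Theory Num.Theory.
Local Open Scope classical_set_scope.
Local Open Scope ring_scope.

#[short(type="topComRingType")]
HB.structure Definition TopComRing := {A of GRing.ComNzRing A & Topological A}.

Definition is_topring (A : topComRingType) : Prop :=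
  [/\ continuous (fun x : A * A => x.1 + x.2),
      continuous (fun x : A => - x) &
      continuous (fun x : A * A => x.1 * x.2)].

Definition is_ideal (A : comNzRingType) (I : set A) : Prop :=
  [/\ I 0, (forall x y, I x -> I y -> I (x - y)) & (forall a x, I x -> I (a * x))].

(* Topologically simple: closure of (0) is the only proper closed ideal
   (and it is proper, i.e. A / closure(0) is a nonzero ring). *)
Definition top_simple (A : topComRingType) : Prop :=
  closure [set (0 : A)] <> setT /\
  forall I : set A, is_ideal I -> closed I -> I <> setT -> I = closure [set 0].

Definition is_field (B : comNzRingType) : Prop :=
  forall x : B, x <> 0 -> exists y, x * y = 1.

Definition add_cauchy (B : topComRingType) (F : set_system B) : Prop :=
  forall U : set B, nbhs (0 : B) U ->
    exists S, F S /\ forall x y, S x -> S y -> U (x - y).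

Definition add_complete (B : topComRingType) : Prop :=
  forall F : set_system B, ProperFilter F -> add_cauchy F ->
    exists l : B, F --> l.

Definition is_ring_hom (A B : comNzRingType) (i : A -> B) : Prop :=
  [/\ forall x y, i (x + y) = i x + i y,
      forall x y, i (x * y) = i x * i y & i 1 = 1].

Definition is_completion (A B : topComRingType) (i : A -> B) : Prop :=
  [/\ is_topring B, hausdorff_space B, add_complete B & is_ring_hom i] /\
  [/\ continuous i, closure (range i) = setT &
      forall (x : A) (U : set A), nbhs x U ->
        exists V : set B, nbhs (i x) V /\ i @^-1` V `<=` U].

(* Powers of the ideal I = (g) of the subring A0:
   ipow 0 = A0, ipow (n+1) = I^n * I = { sum_j c_j g_j | c_j in I^n }. *)
Fixpoint ipow (A : comNzRingType) (A0 : set A) (g : seq A) (n : nat) : set A :=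
  match n with
  | 0%N => A0
  | n.+1 => [set x | exists c : 'I_(size g) -> A,
              (forall j, ipow A0 g n (c j)) /\ x = \sum_(j < size g) c j * g`_j]
  end.

Definition is_subring (A : comNzRingType) (A0 : set A) : Prop :=
  [/\ A0 1, (forall x y, A0 x -> A0 y -> A0 (x - y)) &
      (forall x y, A0 x -> A0 y -> A0 (x * y))].

(* Huber ring: there is an open subring A0 and a finitely generated ideal
   I of A0 such that the powers I^n form a basis of neighbourhoods of 0. *)
Definition is_huber (A : topComRingType) : Prop :=
  is_topring A /\
  exists (A0 : set A) (g : seq A),
    [/\ open A0, is_subring A0, all (fun a => `[< A0 a >]) g,
        (forall n, nbhs (0 : A) (ipow A0 g n)) &
        (forall U, nbhs (0 : A) U -> exists n, ipow A0 g n `<=` U)].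

Definition abs_topology (A : topComRingType) : Prop :=
  exists v : A -> Rdefinitions.R,
    [/\ forall x, 0 <= v x, forall x, v x = 0 <-> x = 0,
        forall x y, v (x * y) = v x * v y,
        forall x y, v (x + y) <= v x + v y &
        forall (x : A) (U : set A),
          nbhs x U <-> exists2 e : Rdefinitions.R, 0 < e &
                         forall y, v (y - x) < e -> U y].

(* Main.v *)
Require Import Defs.
From HB Require Import structures.
From mathcomp Require Import all_boot all_order all_algebra.
From mathcomp Require Import all_classical all_reals topology.
From mathcomp Require Import lra ring Rstruct.
Import Order.TTheory GRing.Theory Num.Theory.
Local Open Scope classical_set_scope.
Local Open Scope ring_scope.
Set Implicit Arguments. Unset Strict Implicit. Unset Printing Implicit Defensive.

Lemma cont2 (B C: topologicalType) (f : B*B -> C) (hc : continuous f) (a b : B) W :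
  nbhs (f (a,b)) W -> exists N1 N2, [/\ nbhs a N1, nbhs b N2 & forall x y, N1 x -> N2 y -> W (f (x,y))].
Proof.
move=> hW; have := hc (a,b) W hW.
case=> [[P Q]] /= [hP hQ] hPQ.
by exists P, Q; split => // x y Px Qy; apply: (hPQ (x,y)).
Qed.

Lemma cont1 (B C: topologicalType) (f : B -> C) (hc : continuous f) (a : B) W :
  nbhs (f a) W -> nbhs a (f @^-1` W).
Proof. by move=> hW; have := hc a W hW. Qed.

Lemma hom0 (A B : comNzRingType) (i : A -> B) : is_ring_hom i -> i 0 = 0.
Proof.
case=> hadd _ _; apply/(@addrI _ (i 0)); by rewrite -hadd !addr0.
Qed.

Lemma homN (A B : comNzRingType) (i : A -> B) : is_ring_hom i -> forall x, i (- x) = - i x.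
Proof.
move=> hi x; have [hadd _ _] := hi.
apply/(@addrI _ (i x)); by rewrite -hadd !subrr hom0.
Qed.

Lemma homB (A B : comNzRingType) (i : A -> B) : is_ring_hom i -> forall x y, i (x - y) = i x - i y.
Proof. by move=> hi x y; have [hadd _ _] := hi; rewrite hadd homN. Qed.

Lemma pullback (A B : topComRingType) (i : A -> B) : is_completion i ->
  forall (S : set A) a, closure (i @` S) (i a) -> closure S a.
Proof.
move=> [_ [_ _ hemb]] S a hcl U hU.
have [V [hV hVU]] := hemb a U hU.
have [_ [[x Sx <-] Vx]] := hcl V hV.
by exists x; split => //; apply: hVU.
Qed.

Lemma cl0 (A B : topComRingType) (i : A -> B) : is_completion i ->
  forall a, closure [set 0] a <-> i a = 0.
Proof.
move=> hc a; have hc' := hc; have [[htB hsB hcB hi] [hci hden hemb]] := hc'.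
split.
- move=> ha; apply: hsB => P Q hP hQ.
  have := ha _ (cont1 hci hP); case=> y [/= -> Py].
  exists 0; split; first by rewrite -(hom0 hi).
  exact: nbhs_singleton.
- move=> ha; apply: (pullback hc) => V hV; exists (i a); split => //.
  by exists 0 => //; rewrite ha hom0.
  exact: nbhs_singleton.
Qed.

Lemma part1 (A : topComRingType) :
  (forall (B : topComRingType) (i : A -> B),
      is_completion i -> is_field B -> top_simple A).
Proof.
move=> B i hc hf; have hc' := hc; have [[htB hsB hcB hi] [hci hden hemb]] := hc'.
have [hadd hmul h1] := hi.
have [_ _ hmc] := htB.
split.
  move=> hT; have : closure [set 0] (1 : A) by rewrite hT.
  by move/(cl0 hc); rewrite h1; apply/eqP; exact: oner_neq0.
move=> I [I0 IB IM] hcl hne.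
have hI0 : forall x, I x -> i x = 0.
  move=> x Ix; apply: contrapT => hx.
  have [y hy] := hf _ hx.
  apply: hne; apply/seteqP; split => // a _.
  rewrite -[a]mulr1; apply: (IM); apply: (hcl); apply: (pullback hc).
  rewrite h1 => W hW.
  have hW' : nbhs ((fun p : B * B => p.1 * p.2) (y, i x)) W by rewrite /= mulrC hy.
  have [N1 [N2 [hN1 hN2 hN]]] := cont2 hmc hW'.
  have : closure (range i) y by rewrite hden.
  case/(_ N1 hN1) => _ [[b _ <-] N1b].
  exists (i (b * x)); split; first by exists (b * x) => //; apply: (IM).
  by rewrite hmul; apply: (hN _ _ N1b); exact: nbhs_singleton.
apply/seteqP; split => x.
  by move/hI0/(cl0 hc).
move/(cl0 hc) => hx; apply: (hcl); apply: (pullback hc) => V hV.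
exists (i x); split => //; last exact: nbhs_singleton.
by exists 0 => //; rewrite hx hom0.
Qed.
Notation R := Rdefinitions.R.

Definition isabs (A : comNzRingType) (v : A -> R) :=
    [/\ forall x, 0 <= v x, forall x, v x = 0 <-> x = 0,
        forall x y, v (x * y) = v x * v y &
        forall x y, v (x + y) <= v x + v y].

Section V.
Lemma v1 (A : comNzRingType) (v : A -> R) : isabs v -> v 1 = 1.
Proof.
case=> h0 hz hM _.
have h : v 1 * v 1 = v 1 by rewrite -hM mulr1.
have hn : v 1 <> 0 by move/hz; apply/eqP; exact: oner_neq0.
have := h0 1; nra.
Qed.

Lemma vN (A : comNzRingType) (v : A -> R) : isabs v -> forall x, v (- x) = v x.
Proof.
move=> hv x; have h1 := v1 hv; case: hv => h0 hz hM _.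
have h : v (-1) * v (-1) = 1 by rewrite -hM mulrNN mulr1.
have hm : v (-1) = 1 by have := h0 (-1); nra.
by rewrite -mulN1r hM hm mul1r.
Qed.

Lemma vsym (A : comNzRingType) (v : A -> R) : isabs v -> forall x y, v (x - y) = v (y - x).
Proof. by move=> hv x y; rewrite -(vN hv) opprB. Qed.

Lemma vtri (A : comNzRingType) (v : A -> R) : isabs v -> forall x y z, v (x - z) <= v (x - y) + v (y - z).
Proof.
move=> hv x y z; case: hv => _ _ _ hD.
have -> : x - z = (x - y) + (y - z) by ring.
exact: hD.
Qed.

Lemma vD3 (A : comNzRingType) (v : A -> R) : isabs v -> forall x y z, v (x + y + z) <= v x + v y + v z.
Proof.
move=> hv x y z; case: hv => _ _ _ hD.
have := hD (x + y) z; have := hD x y; lra.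
Qed.
End V.

Lemma cauchy_step (A : comNzRingType) (v : A -> R) : isabs v ->
  forall (d t : R) x x' c c', 0 < d -> t <= 1 -> d <= v x -> d <= v x' ->
  v (x - x') < t -> v (1 - x * c) < t -> v (1 - x' * c') < t ->
  d * d * v (c - c') < 2 * t * d + 2 * t.
Proof.
move=> hv d t x x' c c' hd ht hx hx' hxx hc hc'.
have hv' := hv; case: hv' => h0 hz hM hD.
have hxc : v (x' * c') < 2.
  have := hD 1 (- (1 - x' * c')); rewrite (vN hv) (v1 hv).
  have -> : 1 + - (1 - x' * c') = x' * c' by ring.
  lra.
have hdc : d * v c' < 2.
  rewrite hM in hxc; have := h0 c'; nra.
have hm : v x * v (c - c') <= t + t + v (x - x') * v c'.
  rewrite -hM.
  have -> : x * (c - c') = (x * c - 1) + (1 - x' * c') + (x' - x) * c' by ring.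
  have := vD3 hv (x * c - 1) (1 - x' * c') ((x' - x) * c').
  rewrite hM (vsym hv x' x) (vsym hv _ 1).
  lra.
have hcc := h0 (c - c').
have hxx0 := h0 (x - x').
have hc0 := h0 c'.
have h1 : d * v (c - c') <= v x * v (c - c') by nra.
have h2 : v (x - x') * (d * v c') <= v (x - x') * 2 by nra.
nra.
Qed.

Definition vnb (A : topComRingType) (v : A -> R) :=
  forall (x : A) (U : set A), nbhs x U <-> exists2 e : R, 0 < e & forall y, v (y - x) < e -> U y.

Lemma clov (A : topComRingType) (v : A -> R) : vnb v ->
  forall (S : set A) y, closure S y <-> forall e : R, 0 < e -> exists w, S w /\ v (w - y) < e.
Proof.
move=> hnb S y; split.
  move=> hcl e he.
  have hN : nbhs y [set w | v (w - y) < e] by apply/hnb; exists e.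
  by have [w [Sw hw]] := hcl _ hN; exists w.
move=> h U /hnb [e he hU]; have [w [Sw hw]] := h e he.
by exists w; split => //; apply: hU.
Qed.

Lemma dense1 (A : topComRingType) (v : A -> R) : isabs v -> vnb v -> top_simple A ->
  forall x : A, x <> 0 -> forall e : R, 0 < e -> exists c, v (1 - x * c) < e.
Proof.
move=> hv hnb [_ hts] x hx e he.
have hv' := hv; case: hv' => h0 hz hM hD.
pose I := closure [set y | exists a, y = x * a].
have [h1|h1] := pselect (I 1).
  have [w [[a ->] hw]] := (clov hnb _ _).1 h1 e he.
  by exists a; rewrite (vsym hv).
exfalso.
have hid : is_ideal I.
  split.
  - by apply: subset_closure; exists 0; rewrite mulr0.
  - move=> y1 y2 /(clov hnb) c1 /(clov hnb) c2; apply/(clov hnb) => e' he'.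
    have he2 : 0 < e' / 2 by rewrite divr_gt0.
    have [w1 [[a1 ->] hw1]] := c1 _ he2.
    have [w2 [[a2 ->] hw2]] := c2 _ he2.
    exists (x * (a1 - a2)); split; first by exists (a1 - a2).
    have -> : x * (a1 - a2) - (y1 - y2) = (x * a1 - y1) + - (x * a2 - y2) by ring.
    have := hD (x * a1 - y1) (- (x * a2 - y2)); rewrite (vN hv); lra.
  - move=> c y /(clov hnb) cy; apply/(clov hnb) => e' he'.
    have hvc := h0 c.
    have hpos : 0 < v c + 1 by lra.
    have he2 : 0 < e' / (v c + 1) by rewrite divr_gt0.
    have [w [[a ->] hw]] := cy _ he2.
    exists (x * (c * a)); split; first by exists (c * a).
    have -> : x * (c * a) - c * y = c * (x * a - y) by ring.
    rewrite hM.
    have hw' : v (x * a - y) * (v c + 1) < e' by rewrite -ltr_pdivlMr.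
    have := h0 (x * a - y); nra.
have hI : I = closure [set 0].
  apply: hts => //; first exact: closed_closure.
  by move=> hT; apply: h1; rewrite hT.
have : closure [set 0] x by rewrite -hI; apply: subset_closure; exists 1; rewrite mulr1.
move/(clov hnb) => hcl.
have hvx : 0 < v x.
  have hx0 := h0 x; have hne : v x <> 0 by move/hz.
  by rewrite lt_neqAle eq_sym hx0 andbT; apply/eqP.
have [w [-> hw]] := hcl _ hvx.
by move: hw; rewrite sub0r (vN hv) ltxx.
Qed.

Lemma part2 (A : topComRingType) (v : A -> R) : isabs v -> vnb v -> top_simple A ->
  forall (B : topComRingType) (i : A -> B), is_completion i -> is_field B.
Proof.
move=> hv hnb hts B i hc b hb.
have hv' := hv; case: hv' => h0 hz hM hD.
have hc' := hc; have [[htB hsB hcB hi] [hci hden hemb]] := hc'.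
have [hadd hmul h1] := hi.
have [hac hnc hmc] := htB.
have hi0 := hom0 hi.
have [Nb [M [hNb hM0 hNM]]] : exists Nb M, [/\ nbhs b Nb, nbhs (0 : B) M &
    forall y, Nb y -> M y -> False].
  apply: contrapT => H; apply: hb; apply: hsB => P Q hP hQ.
  apply: contrapT => hPQ; apply: H; exists P, Q; split => // y Py Qy.
  by apply: hPQ; exists y.
have [d hd hdM] : exists2 d : R, 0 < d & forall y, v (y - 0) < d -> M (i y).
  apply/hnb; apply: (cont1 hci); by rewrite hi0.
have hlow : forall x, Nb (i x) -> d <= v x.
  move=> x hx; rewrite leNgt; apply/negP => hlt.
  by apply: (hNM _ hx); apply: hdM; rewrite subr0.
have hG : forall eta : R, 0 < eta -> exists N, nbhs b N /\
    forall x x', N (i x) -> N (i x') -> v (x - x') < eta.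
  move=> eta heta.
  have hb0 : nbhs (0 : A) [set y | v (y - 0) < eta] by apply/hnb; exists eta.
  have [V [hV hVb]] := hemb 0 _ hb0.
  rewrite hi0 in hV.
  have hV' : nbhs ((fun p : B * B => p.1 + p.2) (b, - b)) V by rewrite /= subrr.
  have [N1 [N2 [hN1 hN2 hN]]] := cont2 hac hV'.
  have hN2' := cont1 hnc hN2.
  exists (N1 `&` (fun y => N2 (- y))); split; first exact: filterI.
  move=> x x' [hx _] [_ hx'].
  have := hVb (x - x'); rewrite /= subr0; apply.
  by rewrite homB //; apply: (hN _ _ hx hx').
pose C (N : set B) (e : R) := [set c | exists x, N (i x) /\ v (1 - x * c) < e].
have hCne : forall N e, nbhs b N -> 0 < e -> exists c, C N e c.
  move=> N e hN he.
  have : closure (range i) b by rewrite hden.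
  case/(_ _ (filterI hN hNb)) => _ [[x _ <-] [hxN hxb]].
  have hx0 : x <> 0.
    move=> hx; have := hlow _ hxb; rewrite hx.
    have -> : v 0 = 0 by apply/hz.
    by rewrite leNgt hd.
  have [c hc1] := dense1 hv hnb hts hx0 he.
  by exists c, x.
pose F : set_system B := fun Y => exists N e, [/\ nbhs b N, 0 < e &
    forall c, C N e c -> Y (i c)].
have PF : ProperFilter F.
  constructor.
    case=> N [e [hN he hC]].
    by have [c hc1] := hCne N e hN he; apply: (hC c).
  constructor.
  - by exists setT, 1; split; [exact: filterT | exact: ltr01 | by []].
  - move=> Y1 Y2 [N1 [e1 [hN1 he1 hC1]]] [N2 [e2 [hN2 he2 hC2]]].
    exists (N1 `&` N2), (Order.min e1 e2); split.
    + exact: filterI.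
    + by rewrite lt_min he1 he2.
    + move=> c [x [[hx1 hx2] hxc]]; move: hxc; rewrite lt_min => /andP [hxc1 hxc2].
      by split; [apply: hC1; exists x | apply: hC2; exists x].
  - move=> P Q hPQ [N [e [hN he hC]]]; exists N, e; split => // c hcc.
    by apply: hPQ; apply: hC.
have hFc : add_cauchy F.
  move=> U hU.
  have hU' : nbhs (0 : A) (i @^-1` U) by apply: (cont1 hci); rewrite hi0.
  have [e he heU] := (hnb _ _).1 hU'.
  pose D := 2 * d + 2 + d * d * e.
  have hD0 : 0 < D by rewrite /D; have := mulr_gt0 (mulr_gt0 hd hd) he; lra.
  pose t := d * d * e / D.
  have htD : t * D = d * d * e by rewrite /t mulfVK // gt_eqF.
  have ht0 : 0 < t by rewrite /t divr_gt0 // mulr_gt0 // mulr_gt0.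
  have ht1 : t <= 1.
    have : d * d * e < D by rewrite /D; lra.
    rewrite -htD => h; nra.
  have [N [hN hNx]] := hG t ht0.
  exists (i @` C (N `&` Nb) t); split.
    exists (N `&` Nb), t; split => //; first exact: filterI.
  move=> _ _ [c [x [[hxN hxb] hxc]] <-] [c' [x' [[hxN' hxb'] hxc']] <-].
  rewrite -homB //; apply: heU; rewrite subr0.
  have := cauchy_step hv hd ht1 (hlow _ hxb) (hlow _ hxb') (hNx _ _ hxN hxN') hxc hxc'.
  have hdd : 0 < d * d by apply: mulr_gt0.
  have := h0 (c - c').
  move=> hcc hlt.
  have hp : 0 <= t * (d * d * e) by apply: mulr_ge0; [exact: ltW | apply: ltW; exact: mulr_gt0].
  have : d * d * v (c - c') < d * d * e by rewrite -htD /D; nra.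
  by rewrite ltr_pM2l.
have [z hz0] := hcB F PF hFc.
exists z.
apply: hsB => P Q hP hQ.
have hP' : nbhs ((fun p : B * B => p.1 * p.2) (b, z)) P by [].
have [N1 [N2 [hN1 hN2 hMM]]] := cont2 hmc hP'.
have : F N2 by move: hz0; rewrite /cvg_to nbhs_filterE; apply.
case=> N [e [hN he hC]].
have hQ' : nbhs (1 : A) (i @^-1` Q) by apply: (cont1 hci); rewrite h1.
have [e1 he1 heQ] := (hnb _ _).1 hQ'.
have hmin : 0 < Order.min e e1 by rewrite lt_min he he1.
have [c [x [[hxN hx1] hxc]]] := hCne _ _ (filterI hN hN1) hmin.
move: hxc; rewrite lt_min => /andP [hxe hxe1].
exists (i (x * c)); split.
  rewrite hmul; apply: hMM => //; apply: hC; exists x; split => //.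
by apply: heQ; rewrite (vsym hv).
Qed.

Theorem lemma4p8 (A : topComRingType) (hA : is_topring A) :
  (forall (B : topComRingType) (i : A -> B),
      is_completion i -> is_field B -> top_simple A) /\
  (is_huber A -> abs_topology A -> top_simple A ->
   forall (B : topComRingType) (i : A -> B),
      is_completion i -> is_field B).
Proof.
split; first exact: part1.
move=> _ [v [h0 hz hM hD hnb]] hts.
have hv : isabs v by split.
exact: (@part2 A v hv hnb hts).
Qed.
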